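(* Let $R$ be a ring with unity and involution $*$, and let $a\in R$. The following statements are equivalent. (1) $a$ is Moore-Penrose invertible. (2) $a^*a$ is strongly left $(a^*,a)$-invertible. (3) $aa^*$ is strongly left $(a,a^* )$-invertible.
   Context: $a$ is Moore-Penrose invertible if there exists $x\in R$ with $axa=a$, $xax=x$, $(ax)^*=ax$, $(xa)^*=xa$. For $u,b,c\in R$, $u$ is strongly left $(b,c)$-invertible if $b\in Rcub$ and $cub$ is regular (there exists $z$ with $cub\,z\,cub=cub$). *)

(* Defs.v *)
From mathcomp Require Import all_boot all_algebra.
Set Implicit Arguments. Unset Strict Implicit. Unset Printing Implicit Defensive.
Import GRing.Theory.
Local Open Scope ring_scope.

Definition involution (R : pzRingType) (star : R -> R) : Prop :=
  [/\ forall x y : R, star (x + y) = star x + star y,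
      forall x y : R, star (x * y) = star y * star x
    & forall x : R, star (star x) = x].

Definition mp_invertible (R : pzRingType) (star : R -> R) (a : R) : Prop :=
  exists x : R, [/\ a * x * a = a, x * a * x = x,
                    star (a * x) = a * x & star (x * a) = x * a].

Definition regular (R : pzRingType) (a : R) : Prop :=
  exists z : R, a * z * a = a.

Definition strongly_left_bc_invertible (R : pzRingType) (u b c : R) : Prop :=
  (exists r : R, b = r * (c * u * b)) /\ regular (c * u * b).

(* Main.v *)
Require Import Defs.
From mathcomp Require Import all_boot all_algebra.
Local Open Scope ring_scope.
Import GRing.Theory.

Lemma mp_star (R : pzRingType) (S : R -> R) (a : R) :
  involution S -> mp_invertible S a -> mp_invertible S (S a).
Proof.
case=> sD sM sK [x [H1 H2 H3 H4]]; exists (S x); split.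
- by rewrite -!sM mulrA H1.
- by rewrite -!sM mulrA H2.
- by rewrite -sM H4.
- by rewrite -sM H3.
Qed.

Lemma one_two (R : pzRingType) (S : R -> R) (a : R) :
  involution S -> mp_invertible S a ->
  strongly_left_bc_invertible (S a * a) (S a) a.
Proof.
case=> sD sM sK [x [H1 H2 H3 H4]].
have F1 : S a * S x = x * a by rewrite -sM H4.
have F2 : S x * S a = a * x by rewrite -sM H3.
have G2 : x * a * S a = S a by rewrite -H4 -sM mulrA H1.
have G3 : a * x * S x = S x by rewrite -H3 -sM mulrA H2.
have G2' y : y * x * a * S a = y * S a by rewrite -[in RHS]G2 !mulrA.
have F2' y : y * S x * S a = y * a * x by rewrite -!mulrA F2.
have F1' y : y * S a * S x = y * x * a by rewrite -!mulrA F1.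
have H1' y : y * a * x * a = y * a by rewrite -[in RHS]H1 !mulrA.
have H2' y : y * x * a * x = y * x by rewrite -[in RHS]H2 !mulrA.
have G3' y : y * a * x * S x = y * S x by rewrite -[in RHS]G3 !mulrA.
split.
- exists (x * S x * x).
  rewrite -[RHS]mul1r !mulrA G2' F2' H2' G2'; by rewrite mul1r.
- exists (S x * x * S x * x).
  by rewrite !mulrA F1' (H1' (a * S a)) (G3' (a * S a)) (F1' a) !H1.
Qed.

Lemma two_one (R : pzRingType) (S : R -> R) (a : R) :
  involution S -> strongly_left_bc_invertible (S a * a) (S a) a ->
  mp_invertible S a.
Proof.
case=> sD sM sK [[r E1] [z wzw]].
have Ew0 : a * (S a * a) * S a = (a * S a) * (a * S a) by rewrite !mulrA.
move: E1 wzw Ew0; move: (a * (S a * a) * S a) => w E1 wzw Ew.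
have Sh : S (a * S a) = a * S a by rewrite sM sK.
move: Ew Sh; move Hh : (a * S a) => h Ew Sh.
have Sw : S w = w by rewrite Ew sM Sh.
have E2 : a = w * S r by rewrite -Sw -sM -E1 sK.
have Eh : h = w * (S r * r) * w by rewrite -!mulrA -E1 mulrA -E2.
have hzw : h * z * w = h by rewrite Eh -!mulrA (mulrA w z w) wzw.
have wzh : w * z * h = h by rewrite Eh !mulrA wzw.
have hw : h * w = w * h by rewrite Ew !mulrA.
exists (S a * z * h); split.
- have -> : a * (S a * z * h) * a = h * z * h * (w * S r) by rewrite -E2 -Hh !mulrA.
  by rewrite mulrA -(mulrA _ h w) hw mulrA hzw -Ew -E2.
- have -> : S a * z * h * a * (S a * z * h) = S a * z * (h * h * z * h)
    by rewrite -Hh !mulrA.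
  by rewrite -Ew wzh.
- have -> : a * (S a * z * h) = h * z * h by rewrite -Hh !mulrA.
  rewrite !sM Sh mulrA.
  have Sz : w * S z * w = w by have := congr1 S wzw; rewrite !sM Sw mulrA.
  rewrite Eh.
  have -> : w * (S r * r) * w * S z * (w * (S r * r) * w) =
            w * (S r * r) * (w * S z * w) * (S r * r) * w by rewrite !mulrA.
  have -> : w * (S r * r) * w * z * (w * (S r * r) * w) =
            w * (S r * r) * (w * z * w) * (S r * r) * w by rewrite !mulrA.
  by rewrite Sz wzw.
- have -> : S a * z * h * a = r * w * z * (h * w) * S r
    by rewrite E1 E2 !mulrA.
  rewrite hw.
  have -> : r * w * z * (w * h) * S r = r * (w * z * w) * h * S r by rewrite !mulrA.
  rewrite wzw !sM sK Sh Sw (mulrA h) hw.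
  by rewrite !mulrA.
Qed.

Lemma mp_starE (R : pzRingType) (S : R -> R) (a : R) :
  involution S -> mp_invertible S a <-> mp_invertible S (S a).
Proof.
move=> inv; split; first exact: mp_star.
by move=> /(@mp_star _ _ _ inv); case: inv => _ _ ->.
Qed.

Lemma one_two_iff (R : pzRingType) (S : R -> R) (a : R) :
  involution S ->
  mp_invertible S a <-> strongly_left_bc_invertible (S a * a) (S a) a.
Proof. by move=> inv; split; [exact: one_two | exact: two_one]. Qed.

Lemma one_three_iff (R : pzRingType) (S : R -> R) (a : R) :
  involution S ->
  mp_invertible S a <-> strongly_left_bc_invertible (a * S a) a (S a).
Proof.
move=> inv; have := @one_two_iff _ _ (S a) inv.
have := @mp_starE _ _ a inv.
case: (inv) => _ _ -> [h1 h2] [h3 h4]; split; auto.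
Qed.

Theorem corollary3p14 (R : pzRingType) (star : R -> R) (a : R) :
  involution star ->
  [/\ (mp_invertible star a <-> strongly_left_bc_invertible (star a * a) (star a) a),
      (mp_invertible star a <-> strongly_left_bc_invertible (a * star a) a (star a))
    & (strongly_left_bc_invertible (star a * a) (star a) a <->
       strongly_left_bc_invertible (a * star a) a (star a))].
Proof.
move=> inv; split; [exact: one_two_iff | exact: one_three_iff |].
have [h1 h2] := @one_two_iff _ _ a inv.
have [h3 h4] := @one_three_iff _ _ a inv.
split; auto.
Qed.
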